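(* Let $1\le k\le n$ be integers, let $M\in\mathbb{R}^{2n\times 2n}$ be symmetric positive definite, let $N=\operatorname{diag}(\nu_1,\ldots,\nu_k)$ with $0<\nu_1<\cdots<\nu_k$, and let $\tilde N=\operatorname{diag}(N,N)$. Consider the problem of minimizing $f(X)=\operatorname{tr}(\tilde N X^TMX)$ over $X\in\mathbb{R}^{2n\times 2k}$ subject to $X^TJ_{2n}X=J_{2k}$. If $X_*$ is a critical point of this problem, then for every $K\in\mathbb{R}^{2k\times 2k}$ with $K^TJ_{2k}K=J_{2k}$ and $K^T\tilde N K=\tilde N$, the matrix $X_*K$ is also a critical point of this problem.
   Context: $J_{2m}=\begin{bmatrix}0 & I_m\\ -I_m & 0\end{bmatrix}$. A point $X_*\in\mathbb{R}^{2n\times 2k}$ is a critical point of the problem if $X_*^TJ_{2n}X_*=J_{2k}$ and there exists a skew-symmetric matrix $L_*\in\mathbb{R}^{2k\times 2k}$ (Lagrange multiplier) such that $MX_*\tilde N=J_{2n}X_*L_*$. *)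

(* Defs.v *)
From mathcomp Require Import all_boot all_order all_algebra.
From mathcomp Require Import reals.
Set Implicit Arguments. Unset Strict Implicit. Unset Printing Implicit Defensive.
Import Order.TTheory GRing.Theory Num.Theory.
Local Open Scope ring_scope.

Definition Jmx (R : ringType) (m : nat) : 'M[R]_(m + m) :=
  block_mx 0 1%:M (- 1%:M) 0.

Definition spd (R : realType) (p : nat) (M : 'M[R]_p) : Prop :=
  M^T = M /\ forall v : 'cV[R]_p, v != 0 -> 0 < (v^T *m M *m v) 0 0.

Definition Ntilde (R : ringType) (k : nat) (N : 'M[R]_k) : 'M[R]_(k + k) :=
  block_mx N 0 0 N.

Definition fobj (R : realType) (n k : nat) (M : 'M[R]_(n + n))
  (Nt : 'M[R]_(k + k)) (X : 'M[R]_(n + n, k + k)) : R :=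
  \tr (Nt *m X^T *m M *m X).

(* Critical point of min tr(Nt X^T M X) s.t. X^T J_{2n} X = J_{2k}:
   feasible and there is a skew-symmetric Lagrange multiplier L with
   M X Nt = J_{2n} X L. *)
Definition critical_point (R : realType) (n k : nat) (M : 'M[R]_(n + n))
  (Nt : 'M[R]_(k + k)) (X : 'M[R]_(n + n, k + k)) : Prop :=
  X^T *m Jmx R n *m X = Jmx R k /\
  exists L : 'M[R]_(k + k), L^T = - L /\ M *m X *m Nt = Jmx R n *m X *m L.

(* Main.v *)
Require Import Defs.
From mathcomp Require Import all_boot all_order all_algebra.
From mathcomp Require Import reals.
Import Order.TTheory GRing.Theory Num.Theory.
Local Open Scope ring_scope.

Lemma comm_diag_sq (R : realFieldType) p (d : 'rV[R]_p) (K : 'M[R]_p) :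
  (forall i, 0 < d 0 i) ->
  diag_mx d *m diag_mx d *m K = K *m (diag_mx d *m diag_mx d) ->
  diag_mx d *m K = K *m diag_mx d.
Proof.
move=> hd; rewrite mulmx_diag mul_diag_mx mul_mx_diag => /matrixP H.
apply/matrixP => i j; rewrite mul_diag_mx mul_mx_diag !mxE.
have := H i j; rewrite !mxE => E.
have [->|Kn] := eqVneq (K i j) 0; first by rewrite mulr0 mul0r.
have : (d 0 i * d 0 i - d 0 j * d 0 j) * K i j = 0.
  by rewrite mulrBl E mulrC subrr.
move/eqP; rewrite mulf_eq0 (negbTE Kn) orbF subr_eq0 => /eqP e.
have : (d 0 i - d 0 j) * (d 0 i + d 0 j) = 0.
  by rewrite -subr_sqr !expr2 e subrr.
move/eqP; rewrite mulf_eq0 => /orP [|]; last first.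
  by move=> h; have := ltr_wpDl (ltW (hd i)) (hd j); rewrite (eqP h) ltxx.
by rewrite subr_eq0 => /eqP ->; rewrite mulrC.
Qed.

Lemma JJ (R : ringType) m : Jmx R m *m Jmx R m = - 1%:M.
Proof.
rewrite /Jmx mulmx_block !mul0mx !mulmx0 !add0r !addr0 mul1mx mulmx1.
by apply/oppr_inj; rewrite opp_block_mx !opprK oppr0 -scalar_mx_block.
Qed.
Lemma JDJ (R : ringType) m (N : 'M[R]_m) :
  Jmx R m *m Ntilde N *m Jmx R m = - Ntilde N.
Proof.
rewrite /Jmx /Ntilde !mulmx_block !mul0mx !mulmx0 !add0r !addr0 !mul0mx.
rewrite mul1mx mulmx1 mulmxN mulmx1 mulNmx mul1mx.
by rewrite opp_block_mx oppr0.
Qed.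


Theorem proposition3p3 (R : realType) (n k : nat) (hk1 : (1 <= k)%N)
  (hkn : (k <= n)%N) (M : 'M[R]_(n + n)) (nu : 'rV[R]_k)
  (hM : spd M)
  (hnu_pos : forall i : 'I_k, 0 < nu 0 i)
  (hnu_incr : forall i j : 'I_k, (i < j)%N -> nu 0 i < nu 0 j)
  (X : 'M[R]_(n + n, k + k))
  (hX : critical_point M (Ntilde (diag_mx nu)) X) :
  forall K : 'M[R]_(k + k),
    K^T *m Jmx R k *m K = Jmx R k ->
    K^T *m Ntilde (diag_mx nu) *m K = Ntilde (diag_mx nu) ->
    critical_point M (Ntilde (diag_mx nu)) (X *m K).
Proof.
move=> K hJ hN.
case: hX => hXJ [L [hL hML]].
set d := row_mx nu nu.
have hD : Ntilde (diag_mx nu) = diag_mx d by rewrite /Ntilde /d diag_mx_row.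
have dpos : forall i, 0 < d 0 i.
  by move=> i; rewrite /d mxE; case: splitP => j _; apply: hnu_pos.
have JD := JDJ R k (diag_mx nu).
rewrite hD in hN hML JD *.
set D := diag_mx d in hN hML JD *.
set J := Jmx R k in hJ hXJ hL hML JD *.
have Ju : J \in unitmx.
  have h : J *m (- J) = 1%:M by rewrite mulmxN /J JJ opprK.
  by case: (mulmx1_unit h).
have Ku : K \in unitmx.
  have := congr1 determinant hJ; rewrite !det_mulmx det_tr => e.
  have dJ : \det J != 0 by rewrite -unitfE -unitmxE.
  rewrite unitmxE unitfE; apply/negP => /eqP h; move: e; rewrite h.
  by rewrite !(mulr0, mul0r) => e; move: dJ; rewrite -e eqxx.
have KJu : K^T *m J \in unitmx by rewrite unitmx_mul unitmx_tr Ku Ju.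
have c1 : J *m D *m K = K *m (J *m D).
  apply: (can_inj (mulKmx KJu)).
  rewrite !mulmxA -(mulmxA _ J J) JJ mulmxN mulmx1 !mulNmx hN.
  by rewrite hJ JJ mulNmx mul1mx.
have c2 : D *m D *m K = K *m (D *m D).
  have e : J *m D *m (J *m D) = - (D *m D).
    by rewrite mulmxA JD mulNmx.
  apply: oppr_inj; rewrite -mulNmx -e -mulmxN -e.
  rewrite -[LHS]mulmxA c1 [LHS]mulmxA c1 -mulmxA.
  by rewrite !mulmxA.
have cD := @comm_diag_sq _ _ _ _ dpos c2.
have Du : D \in unitmx.
  rewrite unitmxE det_diag unitfE; apply/prodf_neq0 => i _.
  by rewrite gt_eqF.
have orth : K^T *m K = 1%:M.
  apply: (can_inj (mulmxK Du)); rewrite mul1mx -mulmxA -cD mulmxA hN //.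
split.
  have h : K^T *m (X^T *m Jmx R n *m X) *m K = J by rewrite hXJ.
  by rewrite trmx_mul !mulmxA; rewrite !mulmxA in h.
exists (K^T *m L *m K); split.
  by rewrite !trmx_mul trmxK hL mulNmx mulmxN mulmxA.
rewrite mulmxA -(mulmxA _ K D) -cD mulmxA hML -!mulmxA; congr (_ *m (_ *m _)).
by rewrite !mulmxA (mulmx1C orth) mul1mx.
Qed.
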